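(* For an integer $g$, let $P_{4,g} = \{(x,y,z)\in\mathbb{R}^3 : 2x-y\ge 0,\ x+y-z\ge 0,\ -x+y+z\ge -1,\ -y+2z\ge -1,\ x+y+z=g,\ x\ge 1,\ y\ge 1,\ z\ge 1\}$. Then: (i) $\#(P_{4,g}\cap\mathbb{Z}^3)$ equals $1,3,4,6,7,9$ for $g=3,4,5,6,7,8$ respectively; (ii) if $g \ge 9$, then $\#(P_{4,g}\cap\mathbb{Z}^3) = \#(T_A(g)\cap\mathbb{Z}^2) + \#(T_B(g)\cap\mathbb{Z}^2) + \#(R(g)\cap\mathbb{Z}^2) - \#(T_C(g)\cap\mathbb{Z}^2)$, where $T_A(g) = \{(x,y)\in\mathbb{R}^2 : 3x+y\ge g,\ x\le \frac{2g+1}{8},\ y\le \frac{g}{2}\}$, $T_B(g) = \{(x,y)\in\mathbb{R}^2 : x+3y\ge g-1,\ x\le \frac{g+1}{2},\ y\le \frac{2g-3}{8}\}$, $R(g) = \{(x,y)\in\mathbb{R}^2 : \frac{2g+1}{8}\le x\le \frac{g+1}{2},\ \frac{2g-3}{8}\le y\le \frac{g}{2}\}$, $T_C(g) = \{(x,y)\in\mathbb{R}^2 : x+y\ge g,\ x\le \frac{g+1}{2},\ y\le \frac{g}{2}\}$. *)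

(* Defs.v *)
From HB Require Import structures.
From mathcomp Require Import all_boot all_order all_algebra.
From mathcomp Require Import all_classical all_reals.
Set Implicit Arguments. Unset Strict Implicit. Unset Printing Implicit Defensive.
Import Order.TTheory GRing.Theory Num.Theory.
Local Open Scope ring_scope.
Local Open Scope classical_set_scope.

Definition has_card (T : Type) (A : set T) (n : nat) : Prop :=
  (A #= [set: 'I_n])%card.

Definition lattice3 (R : realType) (A : set (R * R * R)) : set (int * int * int) :=
  [set p | A (p.1.1%:~R, p.1.2%:~R, p.2%:~R)].
Definition lattice2 (R : realType) (A : set (R * R)) : set (int * int) :=
  [set p | A (p.1%:~R, p.2%:~R)].

Definition P4 (R : realType) (g : int) : set (R * R * R) :=
  [set p | let x := p.1.1 in let y := p.1.2 in let z := p.2 in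
     [/\ [/\ 2 * x - y >= 0, x + y - z >= 0, - x + y + z >= -1 & - y + 2 * z >= -1],
         x + y + z = g%:~R & [/\ x >= 1, y >= 1 & z >= 1]]].

Definition TA (R : realType) (g : int) : set (R * R) :=
  [set p | [/\ 3 * p.1 + p.2 >= g%:~R, p.1 <= (2 * g%:~R + 1) / 8 & p.2 <= g%:~R / 2]].
Definition TB (R : realType) (g : int) : set (R * R) :=
  [set p | [/\ p.1 + 3 * p.2 >= g%:~R - 1, p.1 <= (g%:~R + 1) / 2 & p.2 <= (2 * g%:~R - 3) / 8]].
Definition Rg (R : realType) (g : int) : set (R * R) :=
  [set p | [/\ (2 * g%:~R + 1) / 8 <= p.1, p.1 <= (g%:~R + 1) / 2,
              (2 * g%:~R - 3) / 8 <= p.2 & p.2 <= g%:~R / 2]].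
Definition TC (R : realType) (g : int) : set (R * R) :=
  [set p | [/\ p.1 + p.2 >= g%:~R, p.1 <= (g%:~R + 1) / 2 & p.2 <= g%:~R / 2]].

Arguments P4 R g : clear implicits.
Arguments TA R g : clear implicits.
Arguments TB R g : clear implicits.
Arguments Rg R g : clear implicits.
Arguments TC R g : clear implicits.

(* Main.v *)
Require Import Defs.
From HB Require Import structures.
From mathcomp Require Import all_boot all_order all_algebra.
From mathcomp Require Import all_classical all_reals.
From mathcomp Require Import zify ring lra.
Import Order.TTheory GRing.Theory Num.Theory.
Local Open Scope ring_scope.
Local Open Scope classical_set_scope.

Definition box (n : nat) : seq (int * int) :=
  [seq (Posz i, Posz j) | i <- iota 0 n.+1, j <- iota 0 n.+1].

Lemma box_uniq n : uniq (box n).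
Proof.
apply: allpairs_uniq; try exact: iota_uniq.
by move=> [a b] [c d] _ _ /= [-> ->].
Qed.

Lemma mem_box n a b :
  ((a, b) \in box n) = [&& 0 <= a, a <= n%:Z, 0 <= b & b <= n%:Z].
Proof.
apply/allpairsP/idP.
  case=> [[i j] [hi hj]] /= [-> ->].
  have hi' := mem_iota 0 n.+1 i. have hj' := mem_iota 0 n.+1 j.
  rewrite /= in hi hj. rewrite hi in hi'; rewrite hj in hj'. lia.
move=> h; exists (absz a, absz b) => /=.
split; [have := mem_iota 0 n.+1 `|a|%N | have := mem_iota 0 n.+1 `|b|%N | congr (_, _)]; try (move=> /= ->); lia.
Qed.

Lemma has_card_seq (T : eqType) (x0 : T) (s : seq T) (A : set T) :
  uniq s -> (forall x, A x <-> x \in s) -> has_card A (size s).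
Proof.
move=> us hA; rewrite /has_card.
have -> : A = (fun i => nth x0 s i) @` `I_(size s).
  apply/seteqP; split => x.
  - move=> /hA xs; exists (index x s); first by rewrite /= index_mem.
    exact: nth_index.
  - by case=> i /= hi <-; apply/hA; exact: mem_nth.
apply: card_eq_trans card_II.
apply: inj_card_eq => i j; rewrite !in_setE /= => hi hj /eqP.
by rewrite nth_uniq // => /eqP.
Qed.

Lemma hc_filter (A : set (int * int)) (p : pred (int * int)) n :
  (forall q, A q <-> (p q && (q \in box n))) -> has_card A (count p (box n)).
Proof.
move=> h; rewrite -size_filter; apply: (@has_card_seq _ ((0:int), (0:int)) (seq.filter p (box n)) A).
  by apply: filter_uniq; exact: box_uniq.
by move=> q; rewrite mem_filter.
Qed.

Lemma count_lin (T : eqType) (s : seq T) (p q r t u : pred T) :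
  (forall x, x \in s -> p x + q x = r x + t x + u x)%N ->
  (count p s + count q s = count r s + count t s + count u s)%N.
Proof.
elim: s => //= x s IH H.
have := IH (fun y hy => H y (@mem_behead _ (x :: s) _ hy)).
have := H x (mem_head _ _). lia.
Qed.

Definition pA (g : int) (q : int * int) :=
  [&& g <= 3 * q.1 + q.2, 8 * q.1 <= 2 * g + 1 & 2 * q.2 <= g].
Definition pB (g : int) (q : int * int) :=
  [&& g - 1 <= q.1 + 3 * q.2, 2 * q.1 <= g + 1 & 8 * q.2 <= 2 * g - 3].
Definition pR (g : int) (q : int * int) :=
  [&& 2 * g + 1 <= 8 * q.1, 2 * q.1 <= g + 1, 2 * g - 3 <= 8 * q.2 & 2 * q.2 <= g].
Definition pC (g : int) (q : int * int) :=
  [&& g <= q.1 + q.2, 2 * q.1 <= g + 1 & 2 * q.2 <= g].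
Definition pP (g : int) (q : int * int) :=
  let x := q.1 in let z := q.2 in let y := g - x - z in
  [&& 0 <= 2 * x - y, 0 <= x + y - z, -1 <= - x + y + z, -1 <= - y + 2 * z,
      1 <= x, 1 <= y & 1 <= z].

Ltac toR R := rewrite -(ler_int R) ?(rmorphD, rmorphM, rmorphN, rmorphB) /=.
Ltac hypR R := rewrite -(ler_int R) ?(rmorphD, rmorphM, rmorphN, rmorphB) /=.
Tactic Notation "cvh" constr(R) hyp(h) := move: h; hypR R => h.

Lemma latA (R : realType) g a b : lattice2 (TA R g) (a, b) <-> pA g (a, b).
Proof.
rewrite /lattice2 /TA /pA /=; split.
  by case=> h1 h2 h3; apply/and3P; split; toR R; lra.
case/and3P => h1 h2 h3; cvh R h1; cvh R h2; cvh R h3.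
split; lra.
Qed.

Lemma latB (R : realType) g a b : lattice2 (TB R g) (a, b) <-> pB g (a, b).
Proof.
rewrite /lattice2 /TB /pB /=; split.
  by case=> h1 h2 h3; apply/and3P; split; toR R; lra.
case/and3P => h1 h2 h3; cvh R h1; cvh R h2; cvh R h3.
split; lra.
Qed.

Lemma latC (R : realType) g a b : lattice2 (TC R g) (a, b) <-> pC g (a, b).
Proof.
rewrite /lattice2 /TC /pC /=; split.
  by case=> h1 h2 h3; apply/and3P; split; toR R; lra.
case/and3P => h1 h2 h3; cvh R h1; cvh R h2; cvh R h3.
split; lra.
Qed.

Lemma latR (R : realType) g a b : lattice2 (Rg R g) (a, b) <-> pR g (a, b).
Proof.
rewrite /lattice2 /Rg /pR /=; split.
  by case=> h1 h2 h3 h4; apply/and4P; split; toR R; lra.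
case/and4P => h1 h2 h3 h4; cvh R h1; cvh R h2; cvh R h3; cvh R h4.
split; lra.
Qed.

Definition emb (g : int) (q : int * int) : int * int * int := (q.1, g - q.1 - q.2, q.2).

Lemma latP (R : realType) (n : nat) :
  has_card (lattice3 (P4 R n)) (count (pP n) (box n)).
Proof.
rewrite -size_filter -(size_map (emb n)).
apply: (@has_card_seq _ ((0:int), (0:int), (0:int)) (map (emb n) (seq.filter (pP n) (box n)))).
  rewrite map_inj_uniq; first by apply: filter_uniq; exact: box_uniq.
  by move=> [a b] [c d] [-> _ ->].
set s := seq.filter (pP n) (box n).
move=> [[x y] z]; rewrite /lattice3 /P4 /=; split.
  case=> [[h1 h2 h3 h4] h5 [h6 h7 h8]].
  have e : x + y + z = n.
    apply/eqP; rewrite -(eqr_int R) ?(rmorphD, rmorphM, rmorphN, rmorphB) /=.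
    by apply/eqP.
  move: h1 h2 h3 h4 h6 h7 h8.
  rewrite -[0 : R]/((0:int)%:~R) -[1 : R]/((1:int)%:~R) -[-1 : R]/((-1:int)%:~R).
  have e2 : (2 : R) = (2:int)%:~R by [].
  rewrite e2 -!rmorphM -!rmorphB -!rmorphD -!rmorphN -!rmorphD !ler_int => h1 h2 h3 h4 h6 h7 h8.
  apply/mapP; exists (x, z); last by rewrite /emb /=; congr (_, _, _); lia.
  rewrite /s mem_filter mem_box /pP /=; apply/andP; split; lia.
case/mapP => [[a b]]; rewrite /s mem_filter mem_box /pP /emb /= => /andP[h _] [-> -> ->].
move: h => /and5P[h1 h2 h3 h4 /and3P[h6 h7 h8]].
cvh R h1; cvh R h2; cvh R h3; cvh R h4; cvh R h6; cvh R h7; cvh R h8.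
split; [split; lra| |split; lra].
rewrite ?(rmorphD, rmorphM, rmorphN, rmorphB) /=; ring.
Qed.

Local Close Scope classical_set_scope.
Theorem mainTheorem7 (R : realType) :
  [/\ [/\ has_card (lattice3 (P4 R 3)) 1, has_card (lattice3 (P4 R 4)) 3
          & has_card (lattice3 (P4 R 5)) 4],
      [/\ has_card (lattice3 (P4 R 6)) 6, has_card (lattice3 (P4 R 7)) 7
          & has_card (lattice3 (P4 R 8)) 9] &
      forall g : int, 9 <= g ->
        exists nP nA nB nR nC : nat,
          [/\ has_card (lattice3 (P4 R g)) nP,
              [/\ has_card (lattice2 (TA R g)) nA, has_card (lattice2 (TB R g)) nB,
                  has_card (lattice2 (Rg R g)) nR & has_card (lattice2 (TC R g)) nC] &
              nP%:Z = nA%:Z + nB%:Z + nR%:Z - nC%:Z]].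
Proof.
split.
- by split; [have := latP R 3 | have := latP R 4 | have := latP R 5]; vm_compute.
- by split; [have := latP R 6 | have := latP R 7 | have := latP R 8]; vm_compute.
case=> // n hn.
exists (count (pP n) (box n)), (count (pA n) (box n)), (count (pB n) (box n)),
  (count (pR n) (box n)), (count (pC n) (box n)).
split; first exact: latP.
  split; apply: hc_filter => -[a b]; rewrite mem_box.
  - split => [/latA h | /andP[/latA h _]] //; rewrite h /=; move: h; rewrite /pA /=; lia.
  - split => [/latB h | /andP[/latB h _]] //; rewrite h /=; move: h; rewrite /pB /=; lia.
  - split => [/latR h | /andP[/latR h _]] //; rewrite h /=; move: h; rewrite /pR /=; lia.
  - split => [/latC h | /andP[/latC h _]] //; rewrite h /=; move: h; rewrite /pC /=; lia.
have E := @count_lin _ (box n) (pP n) (pC n) (pA n) (pB n) (pR n).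
have {}E : (count (pP n) (box n) + count (pC n) (box n) =
    count (pA n) (box n) + count (pB n) (box n) + count (pR n) (box n))%N.
  apply: E => -[a b]; rewrite mem_box /pP /pA /pB /pR /pC /= => h; lia.
lia.
Qed.
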